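(* For every integer $n\geqslant3$, the generalized quaternion group $Q_{2^n}=\langle x,y\mid x^{2^{n-1}}=1,\ y^2=x^{2^{n-2}},\ x^y=x^{-1}\rangle$ has a $2$-power-free decomposition.
   Context: The power graph $\mathcal{P}(G)$ of a finite group $G$ has vertex set $G$, two distinct elements being adjacent when one is a power of the other. An $n$-power-free decomposition of $G$ ($n\geqslant1$) is a partition $G=C\uplus B_1\uplus\cdots\uplus B_n$ of $G$ into a cyclic $p$-subgroup $C$ of maximal order (for some prime $p$) and $n$ nonempty subsets $B_1,\ldots,B_n$ such that each $B_i$ is an independent set (pairwise nonadjacent vertices) of $\mathcal{P}(G)$ and $|B_i|>1$ for each $i$. *)

(* Defs.v *)
From mathcomp Require Import all_boot all_fingroup all_solvable.
Set Implicit Arguments. Unset Strict Implicit. Unset Printing Implicit Defensive.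
Local Open Scope group_scope.

Section PowerGraph.
Variable gT : finGroupType.

Definition power_adj (x y : gT) : Prop :=
  x != y /\ ((exists k : nat, x = y ^+ k) \/ (exists k : nat, y = x ^+ k)).

Definition power_independent (B : {set gT}) : Prop :=
  forall x y, x \in B -> y \in B -> ~ power_adj x y.

Definition power_free_decomposition (G : {group gT}) (n : nat) : Prop :=
  1 <= n /\
  exists (p : nat) (C : {group gT}) (B : 'I_n -> {set gT}),
    [/\ prime p, C \subset G, cyclic C, p.-group C &
        (forall D : {group gT}, D \subset G -> cyclic D -> p.-group D ->
            #|D| <= #|C|)] /\
    [/\ G :=: C :|: \bigcup_(i < n) B i,
        (forall i, [disjoint C & B i]),
        (forall i j, i != j -> [disjoint B i & B j])
      & (forall i, 1 < #|B i| /\ power_independent (B i))].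
End PowerGraph.

(* Main.v *)
Require Import Defs.
From mathcomp Require Import all_boot all_fingroup all_solvable.
From mathcomp Require Import zify.
Set Implicit Arguments. Unset Strict Implicit. Unset Printing Implicit Defensive.
Local Open Scope group_scope.

Lemma disjP (T : finType) (A B : {set T}) :
  (forall g, g \in A -> g \in B -> False) -> [disjoint A & B].
Proof.
move=> h; rewrite -setI_eq0; apply/eqP/setP => g; rewrite !inE.
by apply/negbTE/andP => -[h1 h2]; exact: h g h1 h2.
Qed.

Theorem proposition3p6 (n : nat) :
  3 <= n -> power_free_decomposition [set: 'Q_(2 ^ n)]%G 2.
Proof.
move=> n3; set G := [set: 'Q_(2 ^ n)]%G.
have [[x y] gen _] := generators_quaternion n3 (isog_refl G).
have [[_ oX' _] _ [_ _ inv2 _ _] _ _] := quaternion_structure n3 gen (isog_refl G).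
case: gen => oG _ ox Y.
have [m defn] : exists m, n = m.+3 by exists (n - 3); lia.
have e1 : n.-1 = m.+2 by lia.
have e2 : n.-2 = m.+1 by lia.
rewrite e1 /= in ox inv2.
set r := (2 ^ m.+1)%N in inv2.
have qE : (2 ^ m.+2 = r + r)%N by rewrite /r expnS; lia.
have r2 : (2 <= r)%N by rewrite /r expnS; have := expn_gt0 2 m; lia.
rewrite qE in ox.
have Xny : y \notin <[x]> by case/setDP: Y.
have F1 : forall a b, (a < r + r)%N -> (b < r + r)%N -> x ^+ a * y = x ^+ b * y -> a = b.
  move=> a b ha hb /mulIg /eqP; rewrite eq_expg_mod_order ox !modn_small //.
  by move/eqP.
have out : forall t, t \notin <[x]> -> #[t] = 4 /\ t ^+ 2 = x ^+ r.
  move=> t ht; have o4 : #[t] = 4 by apply: oX'; rewrite inE ht in_setT.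
  split => //; apply: inv2; first by rewrite in_setT.
  by rewrite orderXdiv o4.
have outxy : forall a, x ^+ a * y \notin <[x]>.
  by move=> a; rewrite groupMl ?mem_cycle.
have F2 : forall a k, (a < r + r)%N ->
    let t := x ^+ a * y in
    [\/ t ^+ k = 1, t ^+ k = t, t ^+ k = x ^+ r | t ^+ k = x ^+ ((a + r) %% (r + r))%N * y].
  move=> a k ha t; have [o4 t2] := out t (outxy a).
  rewrite -(expg_mod_order t k) o4.
  have : (k %% 4 < 4)%N by rewrite ltn_mod.
  case: (k %% 4) => [|[|[|[|//]]]] _.
  - by constructor 1.
  - by constructor 2; rewrite expg1.
  - by constructor 3.
  - constructor 4; rewrite expgSr t2 /t mulgA -expgD.
    by rewrite -ox (expg_mod_order x (a + r)) addnC.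

have hi : forall (i : 'I_2) (j : 'I_r), (i * r + j < r + r)%N.
  by move=> [[|[|//]]] /= _ j; have := ltn_ord j; lia.
have core : forall (i : 'I_2) (j j' : 'I_r) k,
    (x ^+ (i * r + j)%N * y) ^+ k = x ^+ (i * r + j')%N * y -> j = j' :> nat.
  move=> i j j' k; have [h|h|h|h] := F2 (i * r + j)%N k (hi i j); rewrite h.
  - by move=> e; have := outxy (i * r + j')%N; rewrite -e group1.
  - by move/F1 => /(_ (hi i j) (hi i j')); lia.
  - by move=> e; have := outxy (i * r + j')%N; rewrite -e mem_cycle.
  - clear h; move/F1; rewrite ltn_mod -ox order_gt0 ox => /(_ isT (hi i j')).
    have := ltn_ord j; have := ltn_ord j'.
    case: i => [[|[|//]]] /= _; rewrite ?mul0n ?mul1n ?add0n => hj' hj.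
      by rewrite modn_small; lia.
    by rewrite -addnA (addnC j) addnA modnDl modn_small //; lia.
split => //.
exists 2, <[x]>%G, (fun i : 'I_2 => [set x ^+ (i * r + j)%N * y | j : 'I_r]).
split.
  split => //; first exact: subsetT; first exact: cycle_cyclic.
    by rewrite /pgroup -orderE ox -qE pnatX.
  move=> D _ /cyclicP [d ->] _; rewrite -!orderE ox.
  case: (boolP (d \in <[x]>)) => hd.
    by rewrite -ox dvdn_leq // order_dvdG.
  by rewrite (out d hd).1; lia.
have eG : (2 ^ n = (r + r) * 2)%N by rewrite defn -qE expnSr.
have idx : #|G : <[x]>| = 2.
  by rewrite -divgS ?subsetT // oG -orderE ox eG mulKn //; lia.
split.
- apply/setP => g; rewrite in_setT; symmetry.
  case: (boolP (g \in <[x]>)) => hg; first by rewrite inE hg.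
  rewrite inE (negbTE hg) /=.
  have : g \in <[x]> :* y by rewrite (rcoset_index2 (subsetT _) idx Y) inE hg in_setT.
  case/rcosetP => z /cycleP [i ->] ->.
  rewrite -(expg_mod_order x) ox.
  have : (i %% (r + r) < r + r)%N by rewrite ltn_mod; lia.
  set i' := (i %% (r + r))%N => hi'.
  apply/bigcupP.
  case: (ltnP i' r) => hr.
    exists ord0 => //; apply/imsetP; exists (Ordinal hr) => //=.
  have hr' : (i' - r < r)%N by lia.
  exists (@Ordinal 2 1 isT) => //; apply/imsetP; exists (Ordinal hr') => //=.
  by rewrite mul1n subnKC.
- move=> i; apply: disjP => g hg /imsetP [j _ hgj].
  by have := outxy (i * r + j)%N; rewrite -hgj hg.
- move=> i i' ne; apply: disjP => g /imsetP [j _ ->] /imsetP [j' _].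
  move/F1 => /(_ (hi i j) (hi i' j')).
  have := ltn_ord j; have := ltn_ord j'.
  move: ne; case: i => [[|[|//]]] ?; case: i' => [[|[|//]]] ? //= _; lia.
move=> i; split.
  apply/card_gt1P.
  exists (x ^+ (i * r + (Ordinal (ltnW r2) : nat))%N * y),
         (x ^+ (i * r + (Ordinal r2 : nat))%N * y).
  split; try (apply/imsetP; eexists; [done|reflexivity]).
  apply/eqP => /F1 => /(_ (hi i _) (hi i _)) /=; lia.
move=> a b /imsetP [j _ ->] /imsetP [j' _ ->] [ne [[k hk] | [k hk]]].
  by move: ne; rewrite (core _ _ _ _ (esym hk)) eqxx.
by move: ne; rewrite (core _ _ _ _ (esym hk)) eqxx.
Qed.
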